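(* Let $L$ be the unnormalized Laplacian of a simple undirected network with $M$ edges, with simple eigenvalues $\lambda_1,\dots,\lambda_N$ and orthonormal eigenvectors $\bm v^{(1)},\dots,\bm v^{(N)}$. Suppose the network is modified by adding a set of edges $\mathcal{E}^+$ and removing a set of edges $\mathcal{E}^-$, encoded by $\Delta L=\sum_{(p,q)\in\mathcal{E}^+}\Delta L^{(pq)}-\sum_{(p,q)\in\mathcal{E}^-}\Delta L^{(pq)}$, where $\Delta L^{(pq)}$ has entries $\Delta L^{(pq)}_{pp}=\Delta L^{(pq)}_{qq}=1$, $\Delta L^{(pq)}_{pq}=\Delta L^{(pq)}_{qp}=-1$, and $0$ elsewhere. Let $L(\epsilon)=L+\epsilon\,\Delta L$, assume its eigenvalues $\lambda_i(\epsilon)$ are simple, and let $h(\epsilon)=-\sum_i\frac{\lambda_i(\epsilon)}{2M}\log_2\frac{\lambda_i(\epsilon)}{2M}$. Then $h(\epsilon)=h(0)+\epsilon h'(0)+\mathcal{O}(\epsilon^2)$ with $$h'(0)=-\frac{1}{2M}\sum_{i=1}^N\left(\sum_{(p,q)\in\mathcal{E}^+}(\bm v^{(i)}_p-\bm v^{(i)}_q)^2-\sum_{(p,q)\in\mathcal{E}^-}(\bm v^{(i)}_p-\bm v^{(i)}_q)^2\right)\left(\log_2\frac{\lambda_i}{2M}+\frac{1}{\ln 2}\right).$$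
   Context: For a simple undirected unweighted network with adjacency matrix $A$ and degree matrix $D$, the unnormalized Laplacian is $L=D-A$. The von Neumann entropy of a network with $M$ edges and Laplacian eigenvalues $\lambda_i$ is $-\sum_i\frac{\lambda_i}{2M}\log_2\frac{\lambda_i}{2M}$ with $0\log_2 0=0$. *)

(* Defs.v *)
From mathcomp Require Import all_boot all_order all_algebra.
From mathcomp Require Import all_classical all_reals all_analysis.
Set Implicit Arguments. Unset Strict Implicit. Unset Printing Implicit Defensive.
Import Order.TTheory GRing.Theory Num.Theory.
Local Open Scope ring_scope.

Definition log2 (R : realType) (x : R) : R := ln x / ln 2.

Definition xlog2 (R : realType) (x : R) : R := if x == 0 then 0 else x * log2 x.

Definition simple_graph n (adj : rel 'I_n) : Prop := irreflexive adj /\ symmetric adj.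

Definition num_edges n (adj : rel 'I_n) : nat :=
  #|[set pq : 'I_n * 'I_n | (pq.1 < pq.2)%N && adj pq.1 pq.2]|.

Definition degree n (adj : rel 'I_n) (i : 'I_n) : nat := #|[set j | adj i j]|.

Definition adjacency_mx (R : realType) n (adj : rel 'I_n) : 'M[R]_n :=
  \matrix_(i, j) (adj i j)%:R.

Definition degree_mx (R : realType) n (adj : rel 'I_n) : 'M[R]_n :=
  \matrix_(i, j) (if i == j then (degree adj i)%:R else 0).

Definition laplacian (R : realType) n (adj : rel 'I_n) : 'M[R]_n :=
  degree_mx R adj - adjacency_mx R adj.

Definition dL (R : realType) n (p q : 'I_n) : 'M[R]_n :=
  \matrix_(i, j)
    (if ((i == p) && (j == p)) || ((i == q) && (j == q)) then 1
     else if ((i == p) && (j == q)) || ((i == q) && (j == p)) then -1 else 0).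

Definition DeltaL (R : realType) n (Eplus Eminus : {set 'I_n * 'I_n}) : 'M[R]_n :=
  \sum_(pq in Eplus) dL R pq.1 pq.2 - \sum_(pq in Eminus) dL R pq.1 pq.2.

(* Main.v *)
Require Import Defs.
From mathcomp Require Import all_boot all_order all_algebra.
From mathcomp Require Import all_classical all_reals all_analysis.
From mathcomp Require Import ring lra.
Import Order.TTheory GRing.Theory Num.Theory.
Local Open Scope ring_scope.

Module Helpers.
Set Implicit Arguments. Unset Strict Implicit. Unset Printing Implicit Defensive.
Section Real.
Variable R : realType.

Lemma ln_le_sub1 (x : R) : 0 < x -> ln x <= x - 1.
Proof.
move=> x0; have := expR_ge1Dx (ln x); rewrite lnK ?posrE //; lra.
Qed.

Lemma ln_ge_1subV (x : R) : 0 < x -> 1 - x^-1 <= ln x.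
Proof.
move=> x0; have := @ln_le_sub1 x^-1; rewrite invr_gt0 => /(_ x0).
rewrite lnV ?posrE //; lra.
Qed.

Lemma taylor_xlnx (y y0 : R) : 0 < y -> 0 < y0 ->
  0 <= y * ln y - y0 * ln y0 - (ln y0 + 1) * (y - y0) <= (y - y0) ^+ 2 / y0.
Proof.
move=> yp y0p.
have r0 : 0 < y / y0 by rewrite divr_gt0.
have hl : ln y = ln (y / y0) + ln y0 by rewrite ln_div ?posrE //; ring.
have h1 := ln_le_sub1 r0. have h2 := ln_ge_1subV r0.
set l := ln (y / y0) in hl h1 h2.
rewrite hl invf_div in h2 *.
have e1 : y * (1 - y0 / y) = y - y0 by field; rewrite gt_eqF.
have e2 : y * (y / y0 - 1) - (y - y0) = (y - y0) ^+ 2 / y0 by field; rewrite gt_eqF.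
apply/andP; split.
  have := ler_wpM2l (ltW yp) h2; rewrite e1; nra.
have := ler_wpM2l (ltW yp) h1; rewrite -e2; nra.
Qed.


Lemma ln2_gt0 : 0 < ln (2 : R).
Proof. by apply: ln_gt0; rewrite ltr1n. Qed.

Lemma term_bound (c lam mu K : R) : 0 < c -> 0 <= lam -> 0 <= K ->
  exists C, exists2 d, 0 < d & forall e nu, `|e| < d ->
   `|nu - lam - e * mu| <= K * e ^+ 2 -> (lam = 0 -> nu = 0 /\ mu = 0) ->
   `|xlog2 (nu / c) - xlog2 (lam / c)
      - e * (c^-1 * mu * (log2 (lam / c) + (ln (2 : R))^-1))| <= C * e ^+ 2.
Proof.
move=> c0 lam0 K0.
have [->|lamn0] := eqVneq lam 0.
  exists 0, 1 => // e nu _ _ /(_ erefl) [-> ->].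
  by rewrite /xlog2 !(mulr0, mul0r, eqxx, subr0, normr0, oppr0, addr0).
have lamp : 0 < lam by rewrite lt_neqAle eq_sym lamn0.
set y0 := lam / c.
have y0p : 0 < y0 by rewrite divr_gt0.
set A := `|mu| + K.
have A0 : 0 <= A by rewrite addr_ge0.
exists (((A ^+ 2 / (c ^+ 2 * y0)) + `|ln y0 + 1| * K / c) / ln 2).
exists (Num.min 1 (lam / (2 * (A + 1)))).
  by rewrite lt_min ltr01 /= divr_gt0 // mulr_gt0 // ltr_wpDl.
move=> e nu; rewrite lt_min => /andP[e1 e2] hnu _.
have ea : 0 <= `|e| by [].
have e2' : `|e| * (A + 1) < lam / 2.
  rewrite ltr_pdivlMr in e2; last by rewrite mulr_gt0 // ltr_wpDl.
  nra.
have ee : e ^+ 2 = `|e| ^+ 2 by rewrite real_normK ?num_real.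
have hmu : `|e * mu| = `|e| * `|mu| by rewrite normrM.
have dnl : `|nu - lam| <= `|e| * A.
  have : `|nu - lam| <= `|nu - lam - e * mu| + `|e * mu|.
    by rewrite (le_trans _ (ler_normD _ _)) // subrK.
  rewrite hmu => h; apply: (le_trans h).
  have : K * e ^+ 2 <= K * `|e| by rewrite ee ler_wpM2l // expr2 ler_piMr // ltW.
  rewrite /A; nra.
have nup : 0 < nu.
  have := ler_norm (lam - nu); rewrite distrC => h.
  have : `|e| * A <= `|e| * (A + 1) by rewrite ler_wpM2l // lerDl.
  lra.
set y := nu / c.
have yp : 0 < y by rewrite divr_gt0.
have ln2p := ln2_gt0.
have [T0 T1] := andP (taylor_xlnx yp y0p).
set T := _ - _ - _ in T0 T1.
have eq1 : xlog2 y - xlog2 y0 - e * (c^-1 * mu * (log2 y0 + (ln (2:R))^-1))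
   = (T + (ln y0 + 1) * ((nu - lam - e * mu) / c)) / ln 2.
  rewrite /xlog2 !gt_eqF // /log2 /T /y /y0; field.
  by rewrite !gt_eqF.
rewrite eq1 normrM (ger0_norm (_ : 0 <= (ln (2:R))^-1)); last by rewrite invr_ge0 ltW.
rewrite [X in _ <= X]mulrAC; apply: ler_wpM2r; first by rewrite invr_ge0 ltW.
apply: (le_trans (ler_normD _ _)).
rewrite ger0_norm // [X in _ <= X]mulrDl.
apply: lerD.
  apply: (le_trans T1).
  have -> : (y - y0) ^+ 2 = (nu - lam) ^+ 2 / c ^+ 2 by rewrite /y /y0; field; rewrite gt_eqF.
  have : `|nu - lam| ^+ 2 <= (`|e| * A) ^+ 2 by rewrite lerXn2r // nnegrE mulr_ge0.
  rewrite ee -(real_normK (num_real (nu - lam))) -mulrA -invfM [X in _ <= X]mulrAC => h.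
  rewrite [A ^+ 2 / _ * _]mulrAC; apply: ler_wpM2r; first by rewrite invr_ge0 mulr_ge0 // ?exprn_ge0 // ltW.
  by apply: (le_trans h); rewrite le_eqVlt; apply/orP; left; apply/eqP; ring.
rewrite normrM -!mulrA; apply: ler_wpM2l => //.
rewrite normrM (ger0_norm (_ : 0 <= c^-1)); last by rewrite invr_ge0 ltW.
have ci : 0 < c^-1 by rewrite invr_gt0.
nra.
Qed.


Section Mx.
Variable n : nat.
Implicit Types (x y : 'rV[R]_n) (p q : 'I_n).

Definition dvec (p q : 'I_n) : 'rV[R]_n := delta_mx 0 p - delta_mx 0 q.

Lemma dL_fact (p q : 'I_n) : p != q -> dL R p q = (dvec p q)^T *m dvec p q.
Proof.
move=> pq; apply/matrixP => i j; rewrite !mxE big_ord1 !mxE /=.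
have qp : q != p by rewrite eq_sym.
have [->|ip] := eqVneq i p; have [->|jp] := eqVneq j p;
  rewrite ?eqxx ?(negbTE pq) ?(negbTE qp) /=;
  try (have [->|iq] := eqVneq i q); try (have [->|jq] := eqVneq j q);
  rewrite ?eqxx ?(negbTE pq) ?(negbTE qp) ?(negbTE ip) ?(negbTE jp) ?(negbTE iq) ?(negbTE jq) /=;
  try lra.
all: try case: (j == q); try case: (i == q); rewrite /=; lra.
Qed.


Definition nrm2 x := \sum_j x 0 j ^+ 2.

Lemma nrm2E x : nrm2 x = (x *m x^T) 0 0.
Proof. by rewrite !mxE; apply: eq_bigr => j _; rewrite !mxE expr2. Qed.

Lemma nrm2_ge0 x : 0 <= nrm2 x.
Proof. by apply: sumr_ge0 => j _; rewrite sqr_ge0. Qed.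

Lemma nrm2_gt0 x : x != 0 -> 0 < nrm2 x.
Proof.
move=> x0; rewrite lt_neqAle nrm2_ge0 andbT eq_sym.
apply: contra x0 => /eqP /psumr_eq0P h; apply/eqP/rowP => j.
rewrite mxE; apply/eqP; rewrite -sqrf_eq0; apply/eqP/h => // k _; exact: sqr_ge0.
Qed.

Lemma dotC x y : (x *m y^T) 0 0 = (y *m x^T) 0 0.
Proof. by rewrite !mxE; apply: eq_bigr => j _; rewrite !mxE mulrC. Qed.

Lemma bilinC (S : 'M[R]_n) x y : S^T = S -> (x *m S *m y^T) 0 0 = (y *m S *m x^T) 0 0.
Proof.
move=> St; have -> : (x *m S *m y^T) 0 0 = (x *m S *m y^T)^T 0 0 by rewrite [RHS]mxE.
by rewrite !trmx_mul trmxK St mulmxA.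
Qed.


Lemma residual (S : 'M[R]_n) (nu : 'I_n -> R) (u : 'I_n -> 'rV[R]_n) x (t rho : R) :
  S^T = S -> injective nu -> (forall k, u k != 0) ->
  (forall k, u k *m S = nu k *: u k) ->
  x != 0 -> nrm2 (x *m S - t *: x) <= rho * nrm2 x ->
  exists k, (nu k - t) ^+ 2 <= rho.
Proof.
move=> St nuI u0 uS x0 hy.
pose U : 'M[R]_n := \matrix_(k, j) u k 0 j.
have orth k l : k != l -> (u k *m (u l)^T) 0 0 = 0.
  move=> kl.
  have e1 : (u k *m S *m (u l)^T) 0 0 = nu k * (u k *m (u l)^T) 0 0.
    by rewrite uS -scalemxAl mxE.
  have e2 : (u k *m S *m (u l)^T) 0 0 = nu l * (u k *m (u l)^T) 0 0.
    by rewrite bilinC // uS -scalemxAl mxE dotC.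
  have : (nu k - nu l) * (u k *m (u l)^T) 0 0 = 0 by rewrite mulrBl -e1 -e2 subrr.
  move/eqP; rewrite mulf_eq0 subr_eq0 => /orP[/eqP /nuI /eqP|/eqP //].
  by rewrite (negbTE kl).
pose g : 'rV[R]_n := \row_k (u k *m (u k)^T) 0 0.
have gpos k : 0 < g 0 k by rewrite mxE -nrm2E nrm2_gt0.
have UU : U *m U^T = diag_mx g.
  apply/matrixP => k l; rewrite !mxE.
  have -> : \sum_j U k j * U^T j l = (u k *m (u l)^T) 0 0.
    by rewrite mxE; apply: eq_bigr => j _; rewrite !mxE.
  have [<-|kl] := eqVneq k l; first by rewrite mulr1n mxE.
  by rewrite orth // mulr0n.
have nrmU w : nrm2 (w *m U) = \sum_k (w 0 k) ^+ 2 * g 0 k.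
  rewrite nrm2E trmx_mul mulmxA -(mulmxA w) UU mxE.
  by apply: eq_bigr => k _; rewrite mul_mx_diag !mxE; ring.
have Uunit : U \in unitmx.
  rewrite unitmxE unitfE.
  have : \det (U *m U^T) != 0.
    rewrite UU det_diag; apply/prodf_neq0 => k _; exact: lt0r_neq0.
  by rewrite det_mulmx mulf_eq0 negb_or => /andP[].
pose c := x *m invmx U.
have xc : x = c *m U by rewrite /c -mulmxA mulVmx // mulmx1.
have US : U *m S = diag_mx (\row_k nu k) *m U.
  apply/matrixP => k j; rewrite mul_diag_mx !mxE.
  have := congr1 (fun M : 'rV_n => M 0 j) (uS k); rewrite !mxE => <-.
  by apply: eq_bigr => l _; rewrite !mxE.
pose dv : 'rV[R]_n := \row_k (nu k - t).
have yE : x *m S - t *: x = (c *m diag_mx dv) *m U.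
  have -> : c *m diag_mx dv = c *m diag_mx (\row_k nu k) - t *: c.
    by apply/matrixP => i k; rewrite !mul_mx_diag !mxE; ring.
  by rewrite mulmxBl -scalemxAl -mulmxA -US mulmxA -xc.
rewrite yE xc !nrmU in hy.
case: (boolP [exists k, (nu k - t) ^+ 2 <= rho]) => [/existsP [k hk]|/existsPn H].
  by exists k.
exfalso.
have H' k : rho < (nu k - t) ^+ 2 by rewrite ltNge H.
have [k0 ck0] : exists k0, c 0 k0 != 0.
  apply/existsP; apply: contraT => /existsPn hc; move: x0; rewrite xc.
  have -> : c = 0 by apply/rowP => k; have := hc k; rewrite negbK => /eqP ->; rewrite [RHS]mxE.
  by rewrite mul0mx eqxx.
have : 0 < \sum_k ((c *m diag_mx dv) 0 k) ^+ 2 * g 0 k - rho * \sum_k (c 0 k) ^+ 2 * g 0 k.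
  rewrite mulr_sumr -sumrB (bigD1 k0) //=.
  have ek k : (c *m diag_mx dv) 0 k ^+ 2 * g 0 k - rho * (c 0 k ^+ 2 * g 0 k)
      = (c 0 k ^+ 2 * g 0 k) * ((nu k - t) ^+ 2 - rho).
    by rewrite mul_mx_diag !mxE; ring.
  have a : 0 < (c *m diag_mx dv) 0 k0 ^+ 2 * g 0 k0 - rho * (c 0 k0 ^+ 2 * g 0 k0).
    rewrite ek mulr_gt0 // ?subr_gt0 // mulr_gt0 //.
    by rewrite lt_neqAle sqr_ge0 andbT eq_sym sqrf_eq0.
  have b : 0 <= \sum_(i | i != k0) ((c *m diag_mx dv) 0 i ^+ 2 * g 0 i - rho * (c 0 i ^+ 2 * g 0 i)).
    apply: sumr_ge0 => k _.
    rewrite ek; apply: mulr_ge0; first by rewrite mulr_ge0 ?sqr_ge0 // ltW.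
    by rewrite subr_ge0 ltW.
  lra.
lra.
Qed.


Section Lap.
Variable adj : rel 'I_n.
Hypothesis sg : simple_graph adj.

Let A a b : R := (adj a b)%:R.

Lemma degE a : ((degree adj a)%:R : R) = \sum_b A a b.
Proof.
rewrite /degree -sum1dep_card natr_sum big_mkcond /=; apply: eq_bigr => j _.
by rewrite /A; case: (adj a j).
Qed.

Lemma lapE a b : laplacian R adj a b = (if a == b then \sum_c A a c else 0) - A a b.
Proof. by rewrite !mxE degE. Qed.

Lemma lap_sym : (laplacian R adj)^T = laplacian R adj.
Proof.
case: sg => _ sy; apply/matrixP => a b; rewrite mxE !lapE /A sy eq_sym.
by have [->|//] := eqVneq b a.
Qed.

Lemma lap_one : (const_mx 1 : 'rV[R]_n) *m laplacian R adj = 0.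
Proof.
case: sg => _ sy; apply/rowP => b; rewrite !mxE.
under eq_bigr => a _ do rewrite mxE mul1r lapE.
rewrite sumrB -big_mkcond /= big_pred1_eq; apply/eqP; rewrite subr_eq0; apply/eqP.
by apply: eq_bigr => c _; rewrite /A sy.
Qed.

Lemma lap_psd (z : 'rV[R]_n) : 0 <= (z *m laplacian R adj *m z^T) 0 0.
Proof.
case: sg => _ sy.
have q : (z *m laplacian R adj *m z^T) 0 0 =
   \sum_a \sum_b A a b * (z 0 a ^+ 2 - z 0 a * z 0 b).
  rewrite mxE; under eq_bigr => b _ do rewrite !mxE mulr_suml.
  rewrite exchange_big /=; apply: eq_bigr => a _.
  transitivity (\sum_b ((if a == b then z 0 a * (\sum_c A a c) * z 0 b else 0) - z 0 a * A a b * z 0 b)).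
    apply: eq_bigr => b _; rewrite lapE.
    by case: eqP => _; ring.
  rewrite sumrB -big_mkcond /= (big_pred1 a); last by move=> b; rewrite /= eq_sym.
  rewrite mulr_sumr mulr_suml -sumrB.
  by apply: eq_bigr => b _; ring.
have Pq : \sum_a \sum_b A a b * (z 0 b ^+ 2 - z 0 a * z 0 b) =
          \sum_a \sum_b A a b * (z 0 a ^+ 2 - z 0 a * z 0 b).
  rewrite exchange_big /=; apply: eq_bigr => a _; apply: eq_bigr => b _.
  by rewrite /A sy; ring.
have W : 0 <= \sum_a \sum_b A a b * (z 0 a - z 0 b) ^+ 2.
  apply: sumr_ge0 => a _; apply: sumr_ge0 => b _; apply: mulr_ge0; last exact: sqr_ge0.
  by rewrite /A ler0n.
have W2 : \sum_a \sum_b A a b * (z 0 a - z 0 b) ^+ 2 =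
   \sum_a \sum_b A a b * (z 0 a ^+ 2 - z 0 a * z 0 b) +
   \sum_a \sum_b A a b * (z 0 b ^+ 2 - z 0 a * z 0 b).
  rewrite -big_split; apply: eq_bigr => a _; rewrite -big_split; apply: eq_bigr => b _ /=; ring.
rewrite Pq -q in W2; rewrite W2 in W; lra.
Qed.

End Lap.

Lemma sum_delta (z : 'rV[R]_n) p : \sum_j z 0 j * (j == p)%:R = z 0 p.
Proof.
rewrite (bigD1 p) //= big1 ?addr0; first by rewrite eqxx mulr1.
by move=> j jp; rewrite (negbTE jp) mulr0.
Qed.

Lemma dvec_dot (z : 'rV[R]_n) p q : (z *m (dvec p q)^T) 0 0 = z 0 p - z 0 q.
Proof.
rewrite mxE; under eq_bigr => j _ do rewrite !mxE eqxx /= mulrBr.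
by rewrite sumrB !sum_delta.
Qed.

Lemma dL_sym p q : p != q -> (dL R p q)^T = dL R p q.
Proof. by move=> pq; rewrite dL_fact // trmx_mul trmxK. Qed.

Lemma dL_one p q : p != q -> (const_mx 1 : 'rV[R]_n) *m dL R p q = 0.
Proof.
move=> pq; rewrite dL_fact // mulmxA.
have -> : (const_mx 1 : 'rV[R]_n) *m (dvec p q)^T = 0.
  apply/rowP => k; rewrite ord1 dvec_dot !mxE; lra.
by rewrite mul0mx.
Qed.

Lemma dL_quad (z : 'rV[R]_n) p q : p != q ->
  (z *m dL R p q *m z^T) 0 0 = (z 0 p - z 0 q) ^+ 2.
Proof.
move=> pq; rewrite dL_fact // !mulmxA -mulmxA mxE big_ord1.
change ((z *m (dvec p q)^T) 0 0 * (dvec p q *m z^T) 0 0 = (z 0 p - z 0 q) ^+ 2).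
by rewrite [X in _ * X]dotC dvec_dot expr2.
Qed.

Section DL.
Variables Ep Em : {set 'I_n * 'I_n}.
Hypothesis hp : forall pq, pq \in Ep -> pq.1 != pq.2.
Hypothesis hm : forall pq, pq \in Em -> pq.1 != pq.2.

Lemma DL_sym : (DeltaL R Ep Em)^T = DeltaL R Ep Em.
Proof.
apply/matrixP => a b; rewrite mxE /DeltaL !mxE !summxE.
congr (_ - _); apply: eq_bigr => pq hpq.
  by have := congr1 (fun M : 'M[R]_n => M a b) (dL_sym (hp hpq)); rewrite /= [LHS]mxE.
by have := congr1 (fun M : 'M[R]_n => M a b) (dL_sym (hm hpq)); rewrite /= [LHS]mxE.
Qed.

Lemma DL_one : (const_mx 1 : 'rV[R]_n) *m DeltaL R Ep Em = 0.
Proof.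
rewrite /DeltaL mulmxBr !mulmx_sumr !big1 ?subr0 // => pq hpq.
  exact: dL_one (hm hpq).
exact: dL_one (hp hpq).
Qed.

Lemma DL_quad (z : 'rV[R]_n) : (z *m DeltaL R Ep Em *m z^T) 0 0 =
  \sum_(pq in Ep) (z 0 pq.1 - z 0 pq.2) ^+ 2 - \sum_(pq in Em) (z 0 pq.1 - z 0 pq.2) ^+ 2.
Proof.
rewrite /DeltaL mulmxBr mulmxBl !mulmx_sumr !mulmx_suml !mxE !summxE.
congr (_ - _); apply: eq_bigr => pq hpq.
  by rewrite dL_quad // hp.
by rewrite dL_quad // hm.
Qed.

End DL.

Lemma quad_entry (A D : 'M[R]_n) i :
  (A^T *m D *m A) i i = (row i A^T *m D *m (row i A^T)^T) 0 0.
Proof.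
rewrite tr_row trmxK -row_mul [RHS]mxE [LHS]mxE; apply: eq_bigr => k _.
by rewrite !mxE.
Qed.

Lemma nrm2Z (a : R) x : nrm2 (a *: x) = a ^+ 2 * nrm2 x.
Proof. by rewrite /nrm2 mulr_sumr; apply: eq_bigr => j _; rewrite mxE exprMn. Qed.

Lemma nrm2_ge_entry x j : x 0 j ^+ 2 <= nrm2 x.
Proof.
rewrite /nrm2 (bigD1 j) //= lerDl; apply: sumr_ge0 => k _; exact: sqr_ge0.
Qed.

End Mx.

Lemma fin_lb (T : finType) (P : pred T) (F : T -> R) :
  (forall x, P x -> 0 < F x) -> exists2 g, 0 < g & forall x, P x -> g <= F x.
Proof.
move=> Fp; set s := \sum_(x | P x) (F x)^-1.
have s0 : 0 <= s by apply: sumr_ge0 => x /Fp /ltW; rewrite invr_ge0.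
exists (1 + s)^-1; first by rewrite invr_gt0 ltr_wpDr.
move=> x Px; rewrite -[F x]invrK lef_pV2 ?posrE ?invr_gt0 ?Fp ?ltr_wpDr //.
rewrite /s (bigD1 x) //= addrCA lerDl; apply: addr_ge0 => //.
by apply: sumr_ge0 => y /andP[/Fp /ltW]; rewrite invr_ge0.
Qed.

Lemma abs_of_sq (a b : R) : 0 <= b -> a ^+ 2 <= b ^+ 2 -> `|a| <= b.
Proof. move=> b0 h; rewrite ler_norml; apply/andP; split; nra. Qed.

Lemma small_zero (d K mu : R) : 0 < d -> 0 <= K ->
  (forall e, 0 < e -> e < d -> `|mu| * e <= K * e ^+ 2) -> mu = 0.
Proof.
move=> d0 K0 h; apply/eqP; apply: contraT => mu0.
have m0 : 0 < `|mu| by rewrite normr_gt0.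
set e := Num.min (d / 2) (`|mu| / (2 * (K + 1))).
have e0 : 0 < e by rewrite lt_min !divr_gt0 // mulr_gt0 // ltr_wpDl.
have ed : e < d by rewrite gt_min ltr_pdivrMr // ltr_pMr // ltr1n.
have e2 : e <= `|mu| / (2 * (K + 1)) by rewrite ge_min lexx orbT.
have := h e e0 ed; rewrite expr2 mulrA ler_pM2r // => h2.
have : K * e <= K * (`|mu| / (2 * (K + 1))) by rewrite ler_wpM2l.
have -> : K * (`|mu| / (2 * (K + 1))) = `|mu| * (K / (2 * (K + 1))).
  by rewrite mulrCA.
have : K / (2 * (K + 1)) < 1.
  by rewrite ltr_pdivrMr ?mulr_gt0 ?ltr_wpDl // mul1r; nra.
nra.
Qed.

End Real.

End Helpers.
Import Helpers.

Theorem corollary3p14 (R : realType) (N : nat) (adj : rel 'I_N)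
    (Eplus Eminus : {set 'I_N * 'I_N})
    (lam : 'I_N -> R) (V : 'M[R]_N) (lamt : R -> 'I_N -> R) :
  simple_graph adj ->
  (forall pq, pq \in Eplus -> (pq.1 < pq.2)%N && ~~ adj pq.1 pq.2) ->
  (forall pq, pq \in Eminus -> (pq.1 < pq.2)%N && adj pq.1 pq.2) ->
  V^T *m V = 1%:M ->
  (forall i, laplacian R adj *m col i V = lam i *: col i V) ->
  injective lam ->
  (exists2 d : R, 0 < d & forall e : R, `|e| < d ->
      injective (lamt e) /\
      (forall i, eigenvalue (laplacian R adj + e *: DeltaL R Eplus Eminus) (lamt e i))) ->
  let M : R := (num_edges adj)%:R in
  let h (e : R) : R := - \sum_i xlog2 (lamt e i / (2 * M)) in
  let h'0 : R := - (2 * M)^-1 *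
      \sum_i ((\sum_(pq in Eplus) (V pq.1 i - V pq.2 i) ^+ 2
               - \sum_(pq in Eminus) (V pq.1 i - V pq.2 i) ^+ 2)
              * (log2 (lam i / (2 * M)) + (ln (2 : R))^-1)) in
  exists C : R, exists2 d : R, 0 < d & forall e : R, `|e| < d ->
    `|h e - (h 0 + e * h'0)| <= C * e ^+ 2.
Proof.
move=> sg hEp hEm VtV hV lamI [d0 d0p hd0] M h h'0.
have hp : forall pq, pq \in Eplus -> pq.1 != pq.2.
  move=> pq /hEp /andP[lt _]; apply/eqP => e; by rewrite e ltnn in lt.
have hm : forall pq, pq \in Eminus -> pq.1 != pq.2.
  move=> pq /hEm /andP[lt _]; apply/eqP => e; by rewrite e ltnn in lt.
set c : R := 2 * M.
have c0 : 0 <= c by rewrite mulr_ge0 // ler0n.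
have [cz|cp] := eqVneq c 0.
  exists 0, 1 => // e _.
  rewrite /h /h'0 -/c cz invr0 oppr0 !mul0r mulr0 addr0.
  have z (f : 'I_N -> R) : \sum_i xlog2 (f i * 0) = 0.
    by apply: big1 => i _; rewrite mulr0 /xlog2 eqxx.
  by rewrite !z oppr0 subr0 normr0.
have cpos : 0 < c by rewrite lt_neqAle eq_sym cp.
set L := laplacian R adj.
set D := DeltaL R Eplus Eminus.
have Lsym : L^T = L by exact: lap_sym.
have Dsym : D^T = D by exact: DL_sym.
have VVt : V *m V^T = 1%:M by exact: mulmx1C.
set lamv : 'rV[R]_N := \row_i lam i.
have LV : L *m V = V *m diag_mx lamv.
  apply/matrixP => a i; rewrite mul_mx_diag !mxE.
  have := congr1 (fun X : 'cV[R]_N => X a 0) (hV i); rewrite !mxE mulrC => <-.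
  by apply: eq_bigr => b _; rewrite !mxE.
have Lam : V^T *m L *m V = diag_mx lamv by rewrite -mulmxA LV mulmxA VtV mul1mx.
set B := V^T *m D *m V.
have Bsym : B^T = B by rewrite /B !trmx_mul trmxK Dsym mulmxA.
set mu := fun i => B i i.
have muE i : mu i = \sum_(pq in Eplus) (V pq.1 i - V pq.2 i) ^+ 2
               - \sum_(pq in Eminus) (V pq.1 i - V pq.2 i) ^+ 2.
  rewrite /mu /B quad_entry DL_quad //.
  by congr (_ - _); apply: eq_bigr => pq _; rewrite !mxE.
have lam0 i : 0 <= lam i.
  have : (V^T *m L *m V) i i = lam i by rewrite Lam mxE eqxx mulr1n mxE.
  by move=> <-; rewrite quad_entry lap_psd.
pose S e := diag_mx lamv + e *: B.
have SE e : V^T *m (L + e *: D) *m V = S e.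
  by rewrite mulmxDr mulmxDl Lam -scalemxAr -scalemxAl.
have Ssym e : (S e)^T = S e by rewrite /S linearD linearZ /= tr_diag_mx Bsym.
have eig e : `|e| < d0 -> forall k, exists u : 'rV_N, u != 0 /\ u *m S e = lamt e k *: u.
  move=> he k; have [_ /(_ k) /eigenvalueP [v hv v0]] := hd0 e he.
  exists (v *m V); split.
    apply: contra v0 => /eqP u0.
    have : v *m V *m V^T = v by rewrite -mulmxA VVt mulmx1.
    by rewrite u0 mul0mx => <-.
  by rewrite -SE !mulmxA -(mulmxA v V V^T) VVt mulmx1 hv -scalemxAl.
have Bs i j : B i j = B j i by rewrite -[in LHS]Bsym mxE.
clearbody B.
pose w i : 'rV[R]_N := \row_j (if j == i then 0 else B j i / (lam i - lam j)).
pose K i := nrm2 (w i *m B - B i i *: w i).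
have K0 i : 0 <= K i by apply: nrm2_ge0.
have resid e i : `|e| < d0 -> exists k, `|lamt e k - lam i - e * mu i| <= e ^+ 2 * (1 + K i).
  move=> he; have [u hu] := choice (eig e he).
  have [lamtI _] := hd0 e he.
  set x := delta_mx 0 i + e *: w i.
  have yE : x *m S e - (lam i + e * mu i) *: x = e ^+ 2 *: (w i *m B - B i i *: w i).
    rewrite /x /S mulmxDr -scalemxAr mul_mx_diag mulmxDl -scalemxAl -rowE.
    apply/rowP => j; rewrite !mxE /mu.
    have [->|ji] := eqVneq j i; rewrite ?eqxx ?(negbTE ji) /=; first by ring.
    rewrite Bs; field; by rewrite subr_eq0 eq_sym; apply/eqP => /lamI /eqP; rewrite (negbTE ji).
  have x1 : 1 <= nrm2 x.
    apply: le_trans (nrm2_ge_entry x i); rewrite !mxE !eqxx /= mulr0 addr0 expr1n //.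
  have x0 : x != 0.
    apply/eqP => x0; move: x1; rewrite x0 /nrm2 big1 ?ler10 // => j _.
    by rewrite mxE expr0n.
  have hy : nrm2 (x *m S e - (lam i + e * mu i) *: x) <= ((e ^+ 2) ^+ 2 * K i) * nrm2 x.
    by rewrite yE nrm2Z -/(K i); apply: ler_peMr => //; rewrite mulr_ge0 ?sqr_ge0.
  have [k hk] := residual (Ssym e) lamtI (fun k => proj1 (hu k)) (fun k => proj2 (hu k)) x0 hy.
  exists k; apply: abs_of_sq; first by rewrite mulr_ge0 ?sqr_ge0 // addr_ge0.
  rewrite -addrA -opprD; apply: (le_trans hk).
  rewrite exprMn; have := K0 i; have := sqr_ge0 (e ^+ 2); set E := e ^+ 2; nra.
have zero e : `|e| < d0 -> (0 < N)%N -> exists k, lamt e k = 0.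
  move=> he N0; have [u hu] := choice (eig e he).
  have [lamtI _] := hd0 e he.
  set x := (const_mx 1 : 'rV[R]_N) *m V.
  have xS : x *m S e - 0 *: x = 0.
    rewrite scale0r subr0 -SE /x !mulmxA -(mulmxA _ V V^T) VVt mulmx1.
    by rewrite mulmxDr -scalemxAr lap_one // DL_one // scaler0 addr0 mul0mx.
  have x0 : x != 0.
    apply/eqP => x0.
    have : x *m V^T = const_mx 1 by rewrite /x -mulmxA VVt mulmx1.
    rewrite x0 mul0mx => /rowP /(_ (Ordinal N0)); rewrite !mxE => /eqP.
    by rewrite eq_sym oner_eq0.
  have hy : nrm2 (x *m S e - 0 *: x) <= 0 * nrm2 x.
    by rewrite xS mul0r /nrm2 big1 // => j _; rewrite mxE expr0n.
  have [k hk] := residual (Ssym e) lamtI (fun k => proj1 (hu k)) (fun k => proj2 (hu k)) x0 hy.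
  exists k; apply/eqP; rewrite -sqrf_eq0 eq_le sqr_ge0 andbT.
  by rewrite subr0 in hk.
have [G G0 hG] : exists2 G : R, 0 < G & forall i j, i != j -> G <= `|lam i - lam j|.
  have [|g g0 hg] := @fin_lb R _ (fun ij : 'I_N * 'I_N => ij.1 != ij.2)
      (fun ij => `|lam ij.1 - lam ij.2|).
    move=> [i j] /= ij; rewrite normr_gt0 subr_eq0; apply: contra ij => /eqP /lamI ->.
    exact: eqxx.
  by exists g => // i j ij; apply: (hg (i, j)).
pose Kt := \sum_i (1 + K i).
have Kt0 : 0 <= Kt by apply: sumr_ge0 => i _; rewrite addr_ge0 ?K0.
have KKt i : 1 + K i <= Kt.
  rewrite /Kt (bigD1 i) //= lerDl; apply: sumr_ge0 => j _; by rewrite addr_ge0 ?K0.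
pose Mm := \sum_i `|mu i|.
have Mm0 : 0 <= Mm by apply: sumr_ge0.
have muMm i : `|mu i| <= Mm.
  rewrite /Mm (bigD1 i) //= lerDl; by apply: sumr_ge0 => *.
have TB i : exists Cd : R * R, 0 < Cd.2 /\ forall e nu, `|e| < Cd.2 ->
   `|nu - lam i - e * mu i| <= Kt * e ^+ 2 -> (lam i = 0 -> nu = 0 /\ mu i = 0) ->
   `|xlog2 (nu / c) - xlog2 (lam i / c)
      - e * (c^-1 * mu i * (log2 (lam i / c) + (ln (2 : R))^-1))| <= Cd.1 * e ^+ 2.
  have [C [d' d'0 hd']] := term_bound (mu i) cpos (lam0 i) Kt0.
  by exists (C, d').
have [f hf] := choice TB.
have [|dT dT0 hdT] := @fin_lb R _ predT (fun i => (f i).2).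
  by move=> i _; case: (hf i).
pose d := Num.min (Num.min d0 1) (Num.min (G / (4 * (Mm + Kt + 1))) dT).
have dpos : 0 < d.
  rewrite /d !lt_min d0p ltr01 dT0 /= !andbT; apply: divr_gt0 => //; apply: mulr_gt0; lra.
have matchL e : `|e| < d -> exists sgm : 'I_N -> 'I_N, injective sgm /\
    forall i, `|lamt e (sgm i) - lam i - e * mu i| <= Kt * e ^+ 2 /\
              (lam i = 0 -> lamt e (sgm i) = 0).
  move=> he; move: he; rewrite /d !lt_min => /andP[/andP[he0 he1] /andP[heG heT]].
  have [sgm hsg] := choice (fun i => resid e i he0).
  have ee : e ^+ 2 <= `|e|.
    rewrite -real_normK ?num_real // expr2 ler_piMr //; exact: ltW.
  have bnd i : `|lamt e (sgm i) - lam i - e * mu i| <= Kt * e ^+ 2.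
    apply: (le_trans (hsg i)); rewrite mulrC ler_wpM2r ?sqr_ge0 //.
  have dist i : `|lamt e (sgm i) - lam i| < G / 4.
    have t1 : `|lamt e (sgm i) - lam i| <= `|lamt e (sgm i) - lam i - e * mu i| + `|e * mu i|.
      by rewrite (le_trans _ (ler_normD _ _)) // subrK.
    have t2 : `|e * mu i| <= `|e| * Mm by rewrite normrM ler_wpM2l.
    have t3 : Kt * e ^+ 2 <= Kt * `|e| by rewrite ler_wpM2l.
    have t4 : `|e| * (4 * (Mm + Kt + 1)) < G.
      by rewrite -ltr_pdivlMr // mulr_gt0 //; lra.
    have := bnd i; nra.
  have sgmI : injective sgm.
    move=> i j eij; apply/eqP; apply: contraT => ij.
    have h1 := hG i j ij.
    have h2 := ler_distD (lamt e (sgm i)) (lam i) (lam j).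
    have h3 := dist i; have h4 := dist j; rewrite -eij in h4.
    rewrite [`|lam i - lamt _ _|]distrC in h2.
    clear -h1 h2 h3 h4 G0; lra.
  exists sgm; split => // i; split => // li0.
  have N0 : (0 < N)%N by apply: leq_ltn_trans (ltn_ord i).
  have [k0 k00] := zero e he0 N0.
  have [sgmi sgmK Ksgm] := injF_bij sgmI.
  have [ji|ji] := eqVneq (sgmi k0) i.
    by rewrite -ji Ksgm.
  have := hG _ _ ji; rewrite li0 subr0.
  have := dist (sgmi k0); rewrite Ksgm k00 sub0r normrN.
  lra.
have mu0 i : lam i = 0 -> mu i = 0.
  move=> li0; apply: (small_zero dpos Kt0) => e e0 ed.
  have he : `|e| < d by rewrite ger0_norm ?ltW.
  have [sgm [_ /(_ i) [b z]]] := matchL e he.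
  move: b; rewrite (z li0) li0 subrr sub0r normrN normrM (ger0_norm (ltW e0)) mulrC => //.
exists (\sum_i (f i).1), d => // e he.
have [sgm [sgmI hsgm]] := matchL e he.
have hd0' : `|0 : R| < d by rewrite normr0.
have [sg0 [sg0I hsg0]] := matchL 0 hd0'.
have l0 i : lamt 0 (sg0 i) = lam i.
  have [b _] := hsg0 i; move: b; rewrite mul0r subr0 expr0n /= mulr0.
  by rewrite normr_le0 subr_eq0 => /eqP.
have hE : h e = - \sum_i xlog2 (lamt e (sgm i) / c) by rewrite /h (reindex_inj sgmI).
have h0E : h 0 = - \sum_i xlog2 (lam i / c).
  by rewrite /h (reindex_inj sg0I); congr (- _); apply: eq_bigr => i _; rewrite l0.
rewrite hE h0E /h'0 -/c.
under [X in _ * (_ * X)]eq_bigr => i _ do rewrite -muE.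
set T := fun i => xlog2 (lamt e (sgm i) / c) - xlog2 (lam i / c)
   - e * (c^-1 * mu i * (log2 (lam i / c) + (ln (2 : R))^-1)).
have eqT : \sum_i T i = \sum_i xlog2 (lamt e (sgm i) / c) - \sum_i xlog2 (lam i / c)
   - e * (c^-1 * \sum_i mu i * (log2 (lam i / c) + (ln (2 : R))^-1)).
  rewrite /T !sumrB mulr_sumr mulr_sumr; congr (_ - _); apply: eq_bigr => i _; ring.
have -> : - \sum_i xlog2 (lamt e (sgm i) / c) - (- \sum_i xlog2 (lam i / c) +
   e * (- c^-1 * \sum_i mu i * (log2 (lam i / c) + (ln (2 : R))^-1))) = - \sum_i T i.
  by rewrite eqT; ring.
rewrite normrN; apply: le_trans (ler_norm_sum _ _ _) _; rewrite mulr_suml.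
apply: ler_sum => i _; have [_ hfi] := hf i; apply: hfi.
- apply: (lt_le_trans he); apply: le_trans (hdT i isT).
  by rewrite /d ge_min orbC ge_min lexx orbT.
- by have [] := hsgm i.
- move=> li0; split; last exact: mu0.
  by have [_] := hsgm i; apply.
Qed.
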